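(* Let $\mathcal{F}=(M,\{A^u\}_{u\in Q})$ be an FDFA and $\underline{B}$ the Büchi automaton constructed from $\mathcal{F}$ as in the context. Let $u\in\Sigma^*$ and $v\in\Sigma^+$. If $(u,v^k)$ is accepted by $\mathcal{F}$ for every $k\geq1$, then $uv^\omega\in UP(L(\underline{B}))$.
   Context: $\Sigma$ is a finite alphabet. For a complete DFA $A$ and finite word $w$, $A(w)$ is the state reached from the initial state on $w$. An FDFA is $\mathcal{F}=(M,\{A^q\}_{q\in Q})$ with $M=(\Sigma,Q,q_0,\delta)$ a complete DFA without accepting states and each $A^q=(\Sigma,Q_q,s_q,F_q,\delta_q)$ a complete DFA. $(u,v)$ is accepted by $\mathcal{F}$ iff $M(uv)=M(u)$ and $v\in L(A^{M(u)})$. For an $\omega$-language $L'$, $UP(L')$ is the set of ultimately periodic words in $L'$. Construction of $\underline{B}$: for a DFA $D$ and states $s,t$, $D^s_t$ is $D$ with initial state $s$ and accepting set $\{t\}$. For $u\in Q$, $v\in F_u$ let $\underline{P}_{(u,v)}=M^u_u\times(A^u)^{s_u}_v\times(A^u)^v_v$ (synchronous product, single accepting state $f_P$, initial state $s_P$, states $Q_P$, transitions $\delta_P$). From it form the Büchi automaton with $\epsilon$-transitions $(\Sigma,Q_P\cup\{f\},s_P,\{f\},\delta_P\cup\{(f,\epsilon,s_P),(f_P,\epsilon,f)\})$ with $f$ fresh. $\underline{B}$ has state set $Q$ plus disjoint copies of these automata for all $u\in Q$, $v\in F_u$; initial state $q_0$; accepting states the fresh states $f$; transitions $\delta$, those of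 the components, and $\epsilon$-transitions from $u\in Q$ to the initial state of the component for $(u,v)$. An infinite word is accepted if some run (with $\epsilon$-moves) reading it visits accepting states infinitely often. *)

(* Defs.v *)
From mathcomp Require Import all_boot.
Set Implicit Arguments. Unset Strict Implicit. Unset Printing Implicit Defensive.

Record dfa (Sigma : finType) := DFA {
  dstate : finType;
  dinit  : dstate;
  dacc   : {set dstate};
  dtrans : dstate -> Sigma -> dstate }.

Definition drun (Sigma : finType) (A : dfa Sigma) (s : dstate A) (w : seq Sigma) :=
  foldl (@dtrans Sigma A) s w.
Definition dreach (Sigma : finType) (A : dfa Sigma) (w : seq Sigma) := drun (dinit A) w.
Definition dlang (Sigma : finType) (A : dfa Sigma) (w : seq Sigma) : Prop :=
  dreach A w \in dacc A.

Record fdfa (Sigma : finType) := FDFA {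
  fQ     : finType;
  fq0    : fQ;
  fdelta : fQ -> Sigma -> fQ;
  fprog  : fQ -> dfa Sigma }.

Definition Mreach (Sigma : finType) (F : fdfa Sigma) (w : seq Sigma) : fQ F :=
  foldl (@fdelta Sigma F) (fq0 F) w.

Definition fdfa_accepts (Sigma : finType) (F : fdfa Sigma) (u v : seq Sigma) : Prop :=
  Mreach F (u ++ v) = Mreach F u /\ dlang (fprog (Mreach F u)) v.

(* Buchi automata with epsilon-transitions (None = epsilon). *)
Record enba (Sigma : finType) := ENBA {
  estate : Type;
  einit  : estate;
  eacc   : estate -> Prop;
  etrans : estate -> option Sigma -> estate -> Prop }.

(* An infinite word w is accepted if some run (with epsilon moves) reading all
   of w visits accepting states infinitely often.  r i is the i-th state of the
   run, l i the label of the i-th move, pos i the number of letters of w read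
   before the i-th move. *)
Definition enba_accepts (Sigma : finType) (B : enba Sigma) (w : nat -> Sigma) : Prop :=
  exists (r : nat -> estate B) (l : nat -> option Sigma) (pos : nat -> nat),
    r 0 = einit B /\ pos 0 = 0 /\
    (forall i, @etrans Sigma B (r i) (l i) (r i.+1)) /\
    (forall i, (l i = None /\ pos i.+1 = pos i) \/
               (l i = Some (w (pos i)) /\ pos i.+1 = (pos i).+1)) /\
    (forall n, exists i, n <= pos i) /\
    (forall n, exists i, n <= i /\ @eacc Sigma B (r i)).

(* w = u v^omega (v nonempty) *)
Definition is_upw (Sigma : finType) (u v : seq Sigma) (w : nat -> Sigma) : Prop :=
  0 < size v /\
  forall n, Some (w n) = if n < size u then onth u n
                         else onth v ((n - size u) %% size v).

Definition UP (Sigma : finType) (L : (nat -> Sigma) -> Prop) (w : nat -> Sigma) : Prop :=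
  (exists u v, is_upw u v w) /\ L w.

Section Construction.
Variables (Sigma : finType) (F : fdfa Sigma).

Definition St (u : fQ F) := dstate (fprog u).
Definition AccSt (u : fQ F) := {x : St u | x \in dacc (fprog u)}.

(* states of P_(u,v) = M^u_u x (A^u)^{s_u}_v x (A^u)^v_v *)
Definition Pstate (u : fQ F) := (fQ F * St u * St u)%type.
Definition Pinit (u : fQ F) (v : AccSt u) : Pstate u := (u, dinit (fprog u), sval v).
Definition Pfin (u : fQ F) (v : AccSt u) : Pstate u := (u, sval v, sval v).
Definition Ptrans (u : fQ F) (p : Pstate u) (a : Sigma) : Pstate u :=
  (fdelta p.1.1 a, dtrans p.1.2 a, dtrans p.2 a).

Inductive bstate :=
| BQ of fQ F
| BP (u : fQ F) (v : AccSt u) of Pstate u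
| BF (u : fQ F) of AccSt u.

Inductive btrans : bstate -> option Sigma -> bstate -> Prop :=
| bt_M q a : btrans (BQ q) (Some a) (BQ (fdelta q a))
| bt_P u (v : AccSt u) (p : Pstate u) a : btrans (BP v p) (Some a) (BP v (Ptrans p a))
| bt_f_init u (v : AccSt u) : btrans (BF v) None (BP v (Pinit v))
| bt_fin_f u (v : AccSt u) : btrans (BP v (Pfin v)) None (BF v)
| bt_enter u (v : AccSt u) : btrans (BQ u) None (BP v (Pinit v)).

Definition bacc (s : bstate) : Prop := if s is BF _ _ then True else False.

Definition underlineB : enba Sigma := ENBA (BQ (fq0 F)) bacc btrans.
End Construction.

(* Main.v *)
Require Import Defs.
From mathcomp Require Import all_boot.
From mathcomp Require Import zify.

Section Lasso.
Variables (Sigma : finType) (F : fdfa Sigma) (u V : seq Sigma) (w : nat -> Sigma).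
Variable vv : AccSt (Mreach F u).
Hypothesis VP : 0 < size V.
Hypothesis Hcyc : foldl (@Ptrans _ F _) (Pinit vv) V = Pfin vv.
Hypothesis Hu : forall i, i < size u -> w i = nth (w 0) u i.
Hypothesis HV : forall k, w (size u + k) = nth (w 0) V (k %% size V).

Let n := size u.
Let L := size V.
Definition bo i := (i - n.+1) %/ L.+2.
Definition oo i := (i - n.+1) %% L.+2.
Definition pos i := if i <= n then i else n + bo i * L + minn (oo i) L.
Definition rr i : bstate F := if i <= n then BQ (Mreach F (take i u))
  else if oo i <= L then BP vv (foldl (@Ptrans _ F _) (Pinit vv) (take (oo i) V))
  else BF vv.
Definition ll i := if i < n then Some (w i)
  else if (n < i) && (oo i < L) then Some (w (pos i)) else None.
Definition idx b o := n.+1 + b * L.+2 + o.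

Lemma idx_bo b o : o < L.+2 -> bo (idx b o) = b /\ oo (idx b o) = o.
Proof.
move=> ho; rewrite /bo /oo /idx -addnA addKn divnMDl // modnMDl divn_small //.
by rewrite modn_small // addn0.
Qed.

Lemma idx_gt b o : n < idx b o.
Proof. rewrite /idx; lia. Qed.

Lemma decomp i : n < i -> exists b o, o < L.+2 /\ i = idx b o.
Proof.
move=> hi; exists (bo i), (oo i); split; first by rewrite /oo ltn_mod.
rewrite /idx /bo /oo -addnA -divn_eq; lia.
Qed.

Lemma rr_idx b o : o < L.+2 -> rr (idx b o) =
  if o <= L then BP vv (foldl (@Ptrans _ F _) (Pinit vv) (take o V)) else BF vv.
Proof.
move=> ho; rewrite /rr leqNgt idx_gt /=.
by have [_ ->] := idx_bo b o ho.
Qed.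

Lemma pos_idx b o : o < L.+2 -> pos (idx b o) = n + b * L + minn o L.
Proof.
move=> ho; rewrite /pos leqNgt idx_gt /=.
by have [-> ->] := idx_bo b o ho.
Qed.

Lemma ll_idx b o : o < L.+2 -> ll (idx b o) =
  if o < L then Some (w (n + b * L + o)) else None.
Proof.
move=> ho; rewrite /ll ltnNge (ltnW (idx_gt b o)) /= idx_gt /=.
have [_ ->] := idx_bo b o ho.
case: ifP => // hoL; rewrite pos_idx //; congr (Some (w _)).
have := ltnW hoL; rewrite /minn; case: ltnP => //; lia.
Qed.

Lemma foldl_take_succ (T : Type) (f : T -> Sigma -> T) x s k :
  k < size s -> foldl f x (take k.+1 s) = f (foldl f x (take k s)) (nth (w 0) s k).
Proof. by move=> hk; rewrite (take_nth (w 0) hk) foldl_rcons. Qed.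

Lemma idx_last b : idx b L.+2 = idx b.+1 0.
Proof. rewrite /idx mulSn; lia. Qed.

Lemma idxS b o : (idx b o).+1 = idx b o.+1.
Proof. by rewrite /idx addnS. Qed.

Lemma lasso : enba_accepts (underlineB F) w.
Proof.
exists rr, ll, pos; split; first by rewrite /rr /= take0.
split; first by rewrite /pos.
have pos_le i : i <= n -> pos i = i by rewrite /pos => ->.
have rr_le i : i <= n -> rr i = BQ (Mreach F (take i u)) by rewrite /rr => ->.
have HT : forall i, (ll i = None /\ pos i.+1 = pos i) \/
               (ll i = Some (w (pos i)) /\ pos i.+1 = (pos i).+1).
  move=> i; case: (ltngtP i n) => hi.
  - right; rewrite /ll hi !pos_le //; exact: ltnW.
  - have [b [o [ho ->]]] := decomp i hi.
    rewrite ll_idx // pos_idx // idxS.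
    case: (ltngtP o L) => hoL.
    + right; split => //.
      rewrite pos_idx; last by rewrite ltnS; lia.
      rewrite /minn; case: ltnP; lia.
    + have -> : o = L.+1 by lia.
      left; split => //; rewrite idx_last pos_idx //; rewrite /minn; case: ltnP; case: ltnP; rewrite mulSn; lia.
    + subst o; left; split => //; rewrite pos_idx // /minn; case: ltnP; case: ltnP; lia.
  - subst i; left; split; first by rewrite /ll; have -> : (n < n) = false by lia.
    have -> : n.+1 = idx 0 0 by rewrite /idx mul0n !addn0.
    by rewrite pos_idx // pos_le // mul0n addn0 /minn VP addn0.
split.
  move=> i; case: (ltngtP i n) => hi.
  - rewrite (rr_le i (ltnW hi)) (rr_le i.+1 hi) /ll hi Hu //.
    rewrite /Mreach foldl_take_succ //; exact: bt_M.
  - have [b [o [ho ->]]] := decomp i hi.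
    rewrite ll_idx // rr_idx // idxS.
    case: (ltngtP o L) => hoL.
    + rewrite rr_idx; last by rewrite ltnS; lia.
      rewrite hoL foldl_take_succ //.
      have -> : n + b * L + o = n + (b * L + o) by lia.
      rewrite HV modnMDl modn_small //; exact: bt_P.
    + have -> : o = L.+1 by lia.
      rewrite idx_last rr_idx // take0; exact: bt_f_init.
    + subst o; rewrite rr_idx // ltnNge leqnn /= take_size Hcyc.
      exact: bt_fin_f.
  - subst i; rewrite rr_le // take_size /ll.
    have -> : (n < n) = false by lia.
    have -> : n.+1 = idx 0 0 by rewrite /idx mul0n !addn0.
    rewrite rr_idx // leq0n take0; exact: bt_enter.
split; first exact: HT.
split.
  move=> N; exists (idx N 0); rewrite pos_idx // /minn VP.
  have : N <= N * L by rewrite leq_pmulr.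
  lia.
move=> N; exists (idx N L.+1); split; first by rewrite /idx; lia.
rewrite rr_idx //; have -> : (L.+1 <= L) = false by lia.
done.
Qed.
End Lasso.

Lemma foldl_Ptrans (Sigma : finType) (F : fdfa Sigma) (q : fQ F) (s : seq Sigma) a b c :
  foldl (@Ptrans _ F q) (a, b, c) s =
  (foldl (@fdelta _ F) a s, foldl (@dtrans _ (fprog q)) b s, foldl (@dtrans _ (fprog q)) c s).
Proof. by elim: s a b c => //= x s IH a b c; rewrite IH. Qed.

Lemma flatten_nseqD (T : Type) (v : seq T) a b :
  flatten (nseq (a + b) v) = flatten (nseq a v) ++ flatten (nseq b v).
Proof. by rewrite nseqD flatten_cat. Qed.

Lemma size_flatten_nseq (T : Type) (v : seq T) e : size (flatten (nseq e v)) = e * size v.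
Proof. by elim: e => //= e IH; rewrite size_cat IH mulSn. Qed.

Lemma nth_flatten_nseq (T : Type) (x0 : T) (v : seq T) e o :
  o < e * size v -> nth x0 (flatten (nseq e v)) o = nth x0 v (o %% size v).
Proof.
elim: e o => [|e IH] o; first by rewrite mul0n.
rewrite mulSn /= nth_cat => ho.
case: ltnP => h; first by rewrite modn_small.
rewrite IH; last by lia.
by rewrite -[in RHS](subnK h) modnDr.
Qed.

Theorem lemma4 (Sigma : finType) (F : fdfa Sigma) (u v : seq Sigma) :
  0 < size v ->
  (forall k, 0 < k -> fdfa_accepts F u (flatten (nseq k v))) ->
  forall w : nat -> Sigma, is_upw u v w -> UP (enba_accepts (underlineB F)) w.
Proof.
move=> vpos Hacc w Hupw; split; first by exists u, v.
have [_ Hw] := Hupw.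
set q := Mreach F u.
set A := fprog q.
pose g k := foldl (@dtrans _ A) (dinit A) (flatten (nseq k v)).
have gD a b : g (a + b) = foldl (@dtrans _ A) (g a) (flatten (nseq b v)).
  by rewrite /g flatten_nseqD foldl_cat.
have [i [j [lt_ij eq_ij]]] : exists i j, i < j /\ g i = g j.
  pose f (k : 'I_(#|dstate A|.+1)) := g k.
  have : [exists i, exists j, (i != j) && (f i == f j)].
    apply: contraT => /negP H; exfalso.
    have inj : injective f.
      move=> x y exy; apply/eqP; apply/negPn/negP => nxy; apply: H.
      by apply/existsP; exists x; apply/existsP; exists y; rewrite nxy exy eqxx.
    have := leq_card f inj; rewrite card_ord; lia.
  move=> /existsP [x /existsP [y /andP [nxy /eqP fxy]]].
  case: (ltngtP x y) => hxy.
  - by exists x, y.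
  - by exists y, x.
  - by move/eqP: nxy; case; apply: val_inj.
set d := j - i.
have per m c : g (i + m + c * d) = g (i + m).
  elim: c => [|c IH]; first by rewrite mul0n addn0.
  have -> : i + m + c.+1 * d = j + (m + c * d) by rewrite mulSn /d; lia.
  by rewrite gD -eq_ij -gD addnA IH.
set e := d * i.+1.
have dpos : 0 < d by rewrite /d; lia.
have epos : 0 < e by rewrite /e; nia.
have eie : i <= e by rewrite /e; nia.
have gee : g (e + e) = g e.
  have -> : e + e = i + (e - i) + i.+1 * d by rewrite /e mulnC; lia.
  by rewrite per; congr g; lia.
have [HM Hl] := Hacc e epos.
have Ht : g e \in dacc A by exact: Hl.
pose vv : AccSt q := exist _ (g e) Ht.
set V := flatten (nseq e v).
have sV : size V = e * size v by rewrite size_flatten_nseq.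
apply: (@lasso _ F u V w vv).
- by rewrite sV muln_gt0 epos.
- rewrite /Pinit /Pfin foldl_Ptrans /=.
  have h1 : foldl (@fdelta _ F) q V = q by move: HM; rewrite /Mreach foldl_cat.
  have h2 := gD e e; rewrite gee in h2.
  by rewrite h1 -h2.
- move=> k hk; rewrite -odflt_onth; have := Hw k; rewrite hk => <- //.
- move=> k; have := Hw (size u + k).
  rewrite ltnNge leq_addr /= addKn => Hk.
  rewrite nth_flatten_nseq; last by rewrite -sV ltn_mod sV muln_gt0 epos.
  rewrite modn_dvdm; last by rewrite sV dvdn_mull.
  by rewrite -odflt_onth -Hk.
Qed.
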